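(* Let $H=(V,\mathcal{E})$ be a hypergraph and let $K(H)$ be the graph on vertex set $V$ in which $uv$ is an edge iff $u \neq v$ and $u,v$ belong to a common hyperedge of $H$. For a set $\mathcal{C}$ of cuts, let $\mathcal{M}(\mathcal{C})$ be the integer linear program with one binary variable $x_e\in\{0,1\}$ for each edge $e$ of $K(H)$, which minimizes $\sum_{e\in E(K(H))} x_e$ subject to (1) $\sum_{u,v\in S,\ uv\in E(K(H))} x_{uv}\ \ge |S|-1$ for every $S\in\mathcal{E}$, and (2) $\sum_{e\in E(C)} x_e \ge r-1$ for every cut $C=(X_1,\dots,X_r)\in\mathcal{C}$, where $E(C)$ is the set of edges $xy$ of $K(H)$ with $x\in X_i$, $y\in X_j$, $i\neq j$. For $S\subseteq V$, let $\mathcal{B}_S=\{(X,S\setminus X): X\subseteq S,\ X\notin\{\emptyset,S\}\}$ and let $\mathcal{P}_S$ be the set of all tuples $(X_1,\dots,X_r)$ with $r\ge 2$, each $X_i$ nonempty, the $X_i$ pairwise disjoint and $\bigcup_{i=1}^r X_i=S$. Let $\mathcal{B}_H=\bigcup_{S\in\mathcal{E}}\mathcal{B}_S$ and $\mathcal{P}_H=\bigcup_{S\in\mathcal{E}}\mathcal{P}_S$. Identify a 0-1 assignment $x$ with the graph on $V$ whose edge set is $\{e : x_e=1\}$. Then the optimal solutions of $\mathcal{M}(\mathcal{P}_H)$ are in one-to-one correspondence with the optimal solutions of $\mathcal{M}(\mathcal{B}_H)$, which are in one-to-one correspondence with the optimal solutions of the Minimum Connectivity Inference instance $H$, i.e.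 graphs $G=(V,E)$ with $G[S]$ connected for every $S\in\mathcal{E}$ and $|E|$ minimum.
   Context: A cut is a tuple $(X_1,\dots,X_r)$ with $r\ge 2$ of nonempty, pairwise disjoint subsets of $V$. The Minimum Connectivity Inference (MCI) problem: given a hypergraph $H=(V,\mathcal{E})$, find a graph $G=(V,E)$ such that the induced subgraph $G[S]$ is connected for every hyperedge $S\in\mathcal{E}$ (a feasible solution), minimizing $|E|$. *)

(* Defs.v *)
From mathcomp Require Import all_boot all_order.
Set Implicit Arguments. Unset Strict Implicit. Unset Printing Implicit Defensive.

Section MCI.
Variable V : finType.

(* Graph edges (unordered pairs uv, u <> v) are represented as 2-element
   subsets of V; a graph on V is its edge set F : {set {set V}} with every
   element of size 2. *)

Definition is_edge (e : {set V}) : bool := #|e| == 2.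

Definition KH (HE : {set {set V}}) : {set {set V}} :=
  [set e : {set V} | is_edge e & [exists S in HE, e \subset S]].

Definition is_cut (C : seq {set V}) : Prop :=
  2 <= size C /\
  (forall i, i < size C -> nth set0 C i != set0) /\
  (forall i j, i < size C -> j < size C -> i != j ->
     [disjoint nth set0 C i & nth set0 C j]).

Definition cut_edges (HE : {set {set V}}) (C : seq {set V}) : {set {set V}} :=
  [set e in KH HE | [exists x : V, exists y : V,
     (e == [set x; y]) &&
     [exists i : 'I_(size C), exists j : 'I_(size C),
        (i != j) && (x \in nth set0 C i) && (y \in nth set0 C j)]]].

Definition in_B (S : {set V}) (C : seq {set V}) : Prop :=
  exists X : {set V}, X \subset S /\ X != set0 /\ X != S /\ C = [:: X; S :\: X].

Definition in_P (S : {set V}) (C : seq {set V}) : Prop :=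
  is_cut C /\ \bigcup_(X <- C) X = S.

Definition B_H (HE : {set {set V}}) (C : seq {set V}) : Prop :=
  exists2 S, S \in HE & in_B S C.

Definition P_H (HE : {set {set V}}) (C : seq {set V}) : Prop :=
  exists2 S, S \in HE & in_P S C.

(* A 0-1 assignment x on E(K(H)) is identified with the set X of edges e
   with x_e = 1 (a subset of E(K(H))). *)
Definition ilp_feasible (HE : {set {set V}}) (Cs : seq {set V} -> Prop)
    (X : {set {set V}}) : Prop :=
  X \subset KH HE /\
  (forall S, S \in HE -> #|S| - 1 <= #|[set e in X | e \subset S]|) /\
  (forall C, Cs C -> size C - 1 <= #|X :&: cut_edges HE C|).

Definition ilp_optimal (HE : {set {set V}}) (Cs : seq {set V} -> Prop)
    (X : {set {set V}}) : Prop :=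
  ilp_feasible HE Cs X /\
  (forall Y, ilp_feasible HE Cs Y -> #|X| <= #|Y|).

Definition induced_adj (F : {set {set V}}) (S : {set V}) : rel V :=
  fun x y => [&& x \in S, y \in S & [set x; y] \in F].

Definition induced_connected (F : {set {set V}}) (S : {set V}) : Prop :=
  forall u v, u \in S -> v \in S -> connect (induced_adj F S) u v.

Definition mci_feasible (HE : {set {set V}}) (F : {set {set V}}) : Prop :=
  (forall e, e \in F -> is_edge e) /\
  (forall S, S \in HE -> induced_connected F S).

Definition mci_optimal (HE : {set {set V}}) (F : {set {set V}}) : Prop :=
  mci_feasible HE F /\ (forall F', mci_feasible HE F' -> #|F| <= #|F'|).

End MCI.

(* Main.v *)
Require Import Defs.
From mathcomp Require Import all_boot all_order.
Set Implicit Arguments. Unset Strict Implicit. Unset Printing Implicit Defensive.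

Section Proofs.
Variable V : finType.
Implicit Types (X F W : {set {set V}}) (S A : {set V}).

Definition cutcond X S := forall A, A \subset S -> A != set0 -> A != S ->
  exists x y, [/\ x \in A, y \in S, y \notin A & [set x; y] \in X].

Lemma path_cross (e : rel V) (A : {set V}) u p :
  u \in A -> last u p \notin A -> path e u p ->
  exists x y, [/\ x \in A, y \notin A & e x y].
Proof.
elim: p u => [|w p IH] u uA lA /=.
  by rewrite /= uA in lA.
case/andP=> euw pw.
case wA: (w \in A); first exact: IH wA lA pw.
by exists u, w; rewrite wA.
Qed.

Lemma conn_cutcond X S : induced_connected X S -> cutcond X S.
Proof.
move=> con A sAS /set0Pn[u uA] nAS.
have [v vS vA] : exists2 v, v \in S & v \notin A.
  have : A \proper S by rewrite properEneq nAS.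
  by case/properP=> _ [v vS vA]; exists v.
have cuv := con u v (subsetP sAS u uA) vS.
case/connectP: cuv => p pth lst.
rewrite lst in vA.
have [x [y [xA yA /and3P[xS yS exy]]]] := path_cross uA vA pth.
by exists x, y.
Qed.

Lemma cutcond_conn X S : cutcond X S -> induced_connected X S.
Proof.
move=> cc u v uS vS; apply/negPn/negP => nuv.
set A := [set w in S | connect (induced_adj X S) u w].
have sAS : A \subset S by apply/subsetP=> w; rewrite inE => /andP[].
have uA : u \in A by rewrite inE uS connect0.
have vA : v \notin A by rewrite inE vS.
have A0 : A != set0 by apply/set0Pn; exists u.
have AS : A != S by apply/eqP=> eAS; rewrite eAS vS in vA.
have [x [y [xA yS yA xyX]]] := cc A sAS A0 AS.
move: xA; rewrite inE => /andP[xS cux].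
have : connect (induced_adj X S) u y.
  apply: connect_trans cux (connect1 _).
  by rewrite /induced_adj xS yS xyX.
by move=> cuy; rewrite inE yS cuy in yA.
Qed.

Section Core.
Variables (n : nat) (part : 'I_n -> {set V}) (S : {set V}) (X : {set {set V}}).
Hypothesis part0 : forall i, part i != set0.
Hypothesis partD : forall i j, i != j -> [disjoint part i & part j].
Hypothesis partS : forall i, part i \subset S.
Hypothesis partC : forall x, x \in S -> exists i, x \in part i.
Hypothesis cc : cutcond X S.

Definition Cr := [set e in X | [exists i, exists j, exists x, exists y,
   (i != j) && (x \in part i) && (y \in part j) && (e == [set x; y])]].

Definition U (I : {set 'I_n}) := \bigcup_(i in I) part i.

Lemma core_step k : 0 < k <= n -> exists I : {set 'I_n}, #|I| = k /\
   exists2 W : {set {set V}}, W \subset Cr & k.-1 <= #|W| /\ (forall e, e \in W -> e \subset U I).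
Proof.
elim: k => [//|k IH] /andP[_ kn].
case: k IH kn => [|k] IH kn.
  exists [set Ordinal kn]; split; first by rewrite cards1.
  by exists set0; rewrite ?sub0set //; split=> // e; rewrite inE.
have [I [cI [W sWC [cW WU]]]] := IH (ltnW kn).
have sAS : U I \subset S by apply/bigcupsP=> i _; apply: partS.
have A0 : U I != set0.
  have : I != set0 by rewrite -card_gt0 cI.
  case/set0Pn=> i iI; have /set0Pn[z zi] := part0 i.
  by apply/set0Pn; exists z; apply/bigcupP; exists i.
have [j jI] : exists j, j \notin I.
  apply/existsP; rewrite -negb_forall; apply/negP=> /forallP allI.
  have : I = setT by apply/setP=> i; rewrite inE allI.
  by move=> eI; move: kn; rewrite -cI eI cardsT card_ord ltnn.
have AS : U I != S.
  have /set0Pn[z zj] := part0 j.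
  apply/eqP=> eIS.
  have : z \in U I by rewrite eIS (subsetP (partS j)).
  case/bigcupP=> i iI zi.
  have ij : i != j by apply: contraNneq jI => <-.
  by move: (partD ij); rewrite disjoint_sym => /disjointFr => /(_ _ zj); rewrite zi.
have [x [y [xA yS yA xyX]]] := cc sAS A0 AS.
have [j' yj'] := partC yS.
have j'I : j' \notin I.
  by apply: contra yA => j'I; apply/bigcupP; exists j'.
case/bigcupP: xA => i iI xi.
have ij' : i != j' by apply: contraNneq j'I => <-.
have xyW : [set x; y] \notin W.
  apply/negP=> /WU /subsetP /(_ y); rewrite !inE eqxx orbT => /(_ isT).
  by rewrite (negbTE yA).
exists (j' |: I); split; first by rewrite cardsU1 j'I cI.
exists ([set x; y] |: W).
  rewrite subUset sWC andbT sub1set inE xyX /=.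
  by apply/existsP; exists i; apply/existsP; exists j'; apply/existsP; exists x;
     apply/existsP; exists y; rewrite ij' xi yj' eqxx.
split; first by rewrite cardsU1 xyW.
move=> e; rewrite in_setU1 => /orP[/eqP -> | /WU eU].
  apply/subsetP=> z; rewrite !inE => /orP[] /eqP ->; apply/bigcupP.
    by exists i; rewrite // inE iI orbT.
  by exists j'; rewrite // !inE eqxx.
apply: subset_trans eU _; apply/bigcupsP=> i0 i0I.
by apply: bigcup_sup; rewrite inE i0I orbT.
Qed.

Lemma core : n - 1 <= #|Cr|.
Proof.
case: (posnP n) => [-> //|n0].
have h : 0 < n <= n by rewrite n0 leqnn.
have [I [_ [W sWC [cW _]]]] := core_step h.
by rewrite subn1; apply: leq_trans cW (subset_leq_card sWC).
Qed.
End Core.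

Lemma sing_bound X S : cutcond X S -> #|S| - 1 <= #|[set e in X | e \subset S]|.
Proof.
move=> cc.
pose part (i : 'I_#|S|) := [set @enum_val _ (mem S) i].
apply: (leq_trans (@core #|S| part S X _ _ _ _ cc)).
- by move=> i; apply/set0Pn; exists (enum_val i); rewrite inE.
- move=> i j ij; rewrite /part disjoints1 inE; apply: contra ij => /eqP.
  by move/enum_val_inj ->.
- by move=> i; rewrite sub1set; apply: enum_valP.
- move=> x xS; exists (enum_rank_in xS x); rewrite inE enum_rankK_in //.
- apply: subset_leq_card; apply/subsetP=> e; rewrite !inE => /andP[eX].
  case/existsP=> i /existsP[j /existsP[x /existsP[y /andP[/andP[/andP[_]]]]]].
  rewrite /part !inE => /eqP xi /eqP yj /eqP ee; rewrite eX /= ee xi yj.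
  by apply/subsetP=> z; rewrite !inE => /orP[] /eqP ->; apply: enum_valP.
Qed.

Lemma P_bound HE X S C : X \subset KH HE -> cutcond X S -> in_P S C ->
  size C - 1 <= #|X :&: cut_edges HE C|.
Proof.
move=> XK cc [[_ [C0 CD]] CU].
pose part (i : 'I_(size C)) := nth set0 C i.
apply: (leq_trans (@core (size C) part S X _ _ _ _ cc)).
- by move=> i; apply: C0.
- by move=> i j ij; apply: CD.
- move=> i; rewrite -CU bigcup_seq; apply/subsetP=> z zi; apply/bigcupP; exists (part i) => //; exact: mem_nth.
- move=> x; rewrite -CU bigcup_seq => /bigcupP[Y YC xY].
  have iY : index Y C < size C by rewrite index_mem.
  by exists (Ordinal iY); rewrite /part nth_index.
- apply: subset_leq_card; apply/subsetP=> e; rewrite !inE => /andP[eX].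
  case/existsP=> i /existsP[j /existsP[x /existsP[y /andP[/andP[/andP[ij xi yj] /eqP ee]]]]].
  have := subsetP XK _ eX; rewrite inE => -> /=.
rewrite eX /=;   apply/existsP; exists x; apply/existsP; exists y; rewrite ee eqxx /=.
  by apply/existsP; exists i; apply/existsP; exists j; rewrite ij xi yj.
Qed.

Lemma B_cut HE X S : (forall C, B_H HE C -> size C - 1 <= #|X :&: cut_edges HE C|) ->
  S \in HE -> cutcond X S.
Proof.
move=> hB SH A sAS A0 AS.
have := hB [:: A; S :\: A] (ex_intro2 _ _ S SH (ex_intro _ A (conj sAS (conj A0 (conj AS erefl))))).
rewrite /= card_gt0 => /set0Pn[e]; rewrite !inE => /andP[eX /andP[_]].
case/existsP=> x /existsP[y /andP[/eqP ee /existsP[i /existsP[j /andP[/andP[ij xi] yj]]]]].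
case: i j ij xi yj => [[|[|//]] ?] [[|[|//]] ?] //= ij xi yj.
- by rewrite inE in yj; case/andP: yj => yA yS; exists x, y; rewrite -ee.
- by rewrite inE in xi; case/andP: xi => xA xS; exists y, x; rewrite setUC -ee.
Qed.

Lemma B_in_P S C : in_B S C -> in_P S C.
Proof.
case=> A [sAS [A0 [AS ->]]]; split; last first.
  rewrite big_cons big_cons big_nil setU0; apply/setP=> z; rewrite !inE.
  case zA: (z \in A) => //=; by rewrite (subsetP sAS z zA).
split; first done.
split.
  move=> [|[|//]] _ //=.
  have : A \proper S by rewrite properEneq AS.
  by case/properP=> _ [v vS vA]; apply/set0Pn; exists v; rewrite inE vA.
move=> [|[|//]] [|[|//]] _ _ //= _; rewrite -setI_eq0; apply/eqP/setP=> z;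
  rewrite !inE; by case: (z \in A); rewrite /= ?andbF.
Qed.

Lemma feasPB HE X : ilp_feasible HE (P_H HE) X <-> ilp_feasible HE (B_H HE) X.
Proof.
split.
  case=> XK [h1 hP]; split=> //; split=> // C [S SH /B_in_P iP]; apply: hP; exists S => //.
case=> XK [h1 hB]; split=> //; split=> // C [S SH iP].
exact: P_bound XK (B_cut hB SH) iP.
Qed.

Lemma feasB_mci HE X : ilp_feasible HE (B_H HE) X -> mci_feasible HE X.
Proof.
case=> XK [h1 hB]; split.
  by move=> e /(subsetP XK); rewrite inE => /andP[].
by move=> S SH; apply: cutcond_conn; exact: B_cut hB SH.
Qed.

Lemma mci_feasB HE X : mci_feasible HE X -> X \subset KH HE -> ilp_feasible HE (B_H HE) X.
Proof.
case=> Xe con XK; split=> //; split.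
  by move=> S SH; apply: sing_bound; apply: conn_cutcond; exact: con.
move=> C [S SH [A [sAS [A0 [AS ->]]]]].
have [x [y [xA yS yA xyX]]] := conn_cutcond (con S SH) sAS A0 AS.
rewrite /= card_gt0; apply/set0Pn; exists [set x; y].
rewrite inE xyX /= inE; have := subsetP XK _ xyX; rewrite inE => -> /=.
apply/existsP; exists x; apply/existsP; exists y; rewrite eqxx /=.
apply/existsP; exists (@Ordinal 2 0 isT); apply/existsP; exists (@Ordinal 2 1 isT).
by rewrite /= xA inE yA yS.
Qed.

Lemma mci_restrict HE X : mci_feasible HE X -> mci_feasible HE (X :&: KH HE).
Proof.
case=> Xe con; split.
  by move=> e; rewrite inE => /andP[/Xe].
move=> S SH u v uS vS.
have eqr : induced_adj (X :&: KH HE) S =2 induced_adj X S.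
  move=> x y; rewrite /induced_adj inE.
  case xS: (x \in S); case yS: (y \in S); case xyX: ([set x; y] \in X) => //=.
  rewrite inE (Xe _ xyX) /=; apply/existsP; exists S; rewrite SH /=.
  by apply/subsetP=> z; rewrite !inE => /orP[] /eqP ->.
by rewrite (eq_connect eqr); apply: con.
Qed.

End Proofs.

Unset Implicit Arguments.

Theorem proposition1 (V : finType) (HE : {set {set V}}) :
  (forall X : {set {set V}},
     ilp_optimal HE (P_H HE) X <-> ilp_optimal HE (B_H HE) X) /\
  (forall X : {set {set V}},
     ilp_optimal HE (B_H HE) X <-> mci_optimal HE X).
Proof.
split=> X.
  split; case=> f opt; split.
  - by apply/feasPB.
  - by move=> Y /feasPB; apply: opt.
  - by apply/feasPB.
  - by move=> Y /feasPB; apply: opt.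
split.
  case=> f opt; split; first exact: feasB_mci.
  move=> F' mF'.
  apply: leq_trans (opt _ (mci_feasB (mci_restrict mF') (subsetIr _ _))) _.
  exact: subset_leq_card (subsetIl _ _).
case=> mf opt.
have sub : X :&: KH HE == X.
  rewrite -(geq_leqif (subset_leqif_cards (subsetIl X (KH HE)))).
  exact: opt _ (mci_restrict mf).
have XK : X \subset KH HE by rewrite -(eqP sub) subsetIr.
split; first exact: mci_feasB.
by move=> Y fY; apply: opt; exact: feasB_mci.
Qed.
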